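(* Let $G$ be the Boolean group of all finite subsets of $\mathbb{Z}$ with symmetric difference as the group operation (identity $\emptyset$), and let $$A=G\setminus\{\{x,y\}: x,y\in\mathbb{Z},\ 0\ne x-y\in\{z^3:z\in\mathbb{Z}\}\}.$$ Then: (i) $A$ is a Ramsey $\vec m$-product subset of $G$ for every $\vec m=(m_1,\dots,m_k)\in(2\mathbb{Z}+1)^k$ with $k\ge2$; (ii) there is no large subset $B$ of $G$ with $BB^{-1}\subseteq A$; (iii) $A$ is not a neighbourhood of the identity in any totally bounded group topology on $G$.
   Context: A subset $A$ of a group $G$ is a Ramsey $\vec m$-product subset, for $\vec m\in\mathbb{Z}^k$, if every infinite $X\subseteq G$ contains pairwise distinct $x_1,\dots,x_k\in X$ with $x_{\sigma(1)}^{m_1}\cdots x_{\sigma(k)}^{m_k}\in A$ for every $\sigma\in S_k$. A subset $B$ of $G$ is large if $G=FB$ for some finite $F\subseteq G$. *)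

(* Defs.v *)
From HB Require Import structures.
From mathcomp Require Import all_boot all_order all_algebra all_fingroup.
From Stdlib Require Lists.List.
Set Implicit Arguments. Unset Strict Implicit. Unset Printing Implicit Defensive.
Import Order.TTheory GRing.Theory Num.Theory.

Section GroupNotions.
Variables (T : Type) (mul : T -> T -> T) (inv : T -> T) (e : T).

Definition zpow (x : T) (m : int) : T :=
  match m with
  | Posz n => iter n (mul x) e
  | Negz n => inv (iter n.+1 (mul x) e)
  end.

Definition finite_set (X : T -> Prop) : Prop :=
  exists s : list T, forall x, X x -> Stdlib.Lists.List.In x s.

Definition perm_product (k : nat) (m : 'I_k -> int) (x : 'I_k -> T)
    (s : {perm 'I_k}) : T :=
  foldr mul e [seq zpow (x (s i)) (m i) | i <- enum 'I_k].

Definition ramsey_product_subset (k : nat) (m : 'I_k -> int) (A : T -> Prop) :=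
  forall X : T -> Prop, ~ finite_set X ->
    exists x : 'I_k -> T,
      injective x /\ (forall i, X (x i)) /\
      (forall s : {perm 'I_k}, A (perm_product m x s)).

Definition large (B : T -> Prop) : Prop :=
  exists F : list T, forall g, exists f b, Stdlib.Lists.List.In f F /\ B b /\ g = mul f b.

Definition BBinv_sub (B A : T -> Prop) : Prop :=
  forall b1 b2, B b1 -> B b2 -> A (mul b1 (inv b2)).

Definition is_topology (open : (T -> Prop) -> Prop) : Prop :=
  open (fun _ => True) /\
  (forall (I : Type) (U : I -> T -> Prop),
      (forall i, open (U i)) -> open (fun x => exists i, U i x)) /\
  (forall U V, open U -> open V -> open (fun x => U x /\ V x)).

Definition is_group_topology (open : (T -> Prop) -> Prop) : Prop :=
  is_topology open /\
  (forall U a b, open U -> U (mul a b) ->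
     exists V W, open V /\ open W /\ V a /\ W b /\
       (forall v w, V v -> W w -> U (mul v w))) /\
  (forall U, open U -> open (fun x => U (inv x))).

Definition neighbourhood_of_e (open : (T -> Prop) -> Prop) (A : T -> Prop) :=
  exists U, open U /\ U e /\ (forall x, U x -> A x).

Definition totally_bounded (open : (T -> Prop) -> Prop) : Prop :=
  forall U, neighbourhood_of_e open U -> large U.

End GroupNotions.

(* A finite subset is represented by its strictly increasing list.      *)

Definition finZset := {s : seq int | sorted <%O s}.

Definition fmem (g : finZset) (z : int) : bool := z \in sval g.

Definition fsymdiff (g h : finZset) : finZset :=
  exist _ (sort <=%O (undup ([seq z <- sval g | z \notin sval h] ++
                             [seq z <- sval h | z \notin sval g])))
        (eq_ind_r is_true (undup_uniq _) (sort_lt_sorted _)).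

Definition finZinv (g : finZset) : finZset := g.

Definition fempty : finZset := exist _ [::] (erefl true).

Definition A_cube (g : finZset) : Prop :=
  ~ (exists x y : int, (x - y != 0)%R /\ (exists z : int, (x - y = z ^+ 3)%R) /\
       (forall w, fmem g w = (w == x) || (w == y))).

(* Main.v *)
Require Import Defs.
From HB Require Import structures.
From mathcomp Require Import all_boot all_order all_algebra all_fingroup.
From Stdlib Require Lists.List.
From mathcomp Require Import zify ring lra.
From Stdlib Require Import Classical_Prop.
From Stdlib Require IndefiniteDescription.

Module Helpers.
Set Implicit Arguments. Unset Strict Implicit. Unset Printing Implicit Defensive.
Import Order.TTheory GRing.Theory Num.Theory.

Lemma In_mem (T : eqType) (x : T) (s : seq T) : List.In x s <-> x \in s.
Proof.
elim: s => [|y s IH] //=; rewrite in_cons; split.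
- by case=> [->|/IH ->]; rewrite ?eqxx ?orbT.
- by case/orP=> [/eqP ->|/IH]; [left|right].
Qed.

Lemma fmemD g h z : fmem (fsymdiff g h) z = fmem g z (+) fmem h z.
Proof.
rewrite /fmem /= mem_sort mem_undup mem_cat !mem_filter.
by case: (z \in sval g); case: (z \in sval h).
Qed.

Lemma finZ_ext (g h : finZset) : (forall z, fmem g z = fmem h z) -> g = h.
Proof.
case: g => s Hs; case: h => t Ht /= E.
have st : s = t.
  apply: (irr_sorted_eq (leT := <%O) _ _ Hs Ht E); first exact: lt_trans.
  by move=> x; rewrite /= ltxx.
subst t; congr exist; exact: bool_irrelevance.
Qed.

Lemma fmem0 z : fmem fempty z = false. Proof. by []. Qed.

Definition single (n : int) : finZset := exist _ [:: n] (erefl true).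
Lemma fmem_single n z : fmem (single n) z = (z == n).
Proof. by rewrite /fmem /= inE. Qed.

Local Open Scope ring_scope.

Definition zrange (R : nat) : seq int := [seq (i%:Z - R%:Z) | i <- iota 0 (2*R).+1].

Arguments zrange : simpl never.

Lemma zrange_sorted R : sorted <%O (zrange R).
Proof.
rewrite /zrange; apply: (homo_sorted (e := ltn)); last exact: iota_ltn_sorted.
by move=> x y xy /=; rewrite ltrD2r ltz_nat.
Qed.

Lemma mem_zrange R w : `|w| <= R%:Z -> w \in zrange R.
Proof.
move=> hw; move: (hw); rewrite ler_norml => /andP[h1 h2].
have h0 : 0 <= w + R%:Z by lia.
have e : ((absz (w + R%:Z))%:Z = w + R%:Z) by lia.
apply/mapP; exists (absz (w + R%:Z)); last by rewrite e addrK.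
rewrite mem_iota add0n ltnS; lia.
Qed.

Fixpoint allbits (n : nat) : seq bitseq :=
  if n is n'.+1 then [seq b :: m | b <- [:: true; false], m <- allbits n'] else [:: [::]].

Lemma mem_allbits (m : bitseq) : m \in allbits (size m).
Proof.
elim: m => [|b m IH]; first by [].
change (b :: m \in [seq b :: m | b <- [:: true; false], m <- allbits (size m)]).
by apply: (allpairs_f (fun b m => b :: m)) => //; case: b.
Qed.

Definition mkZ R (m : bitseq) : finZset :=
  exist _ (mask m (zrange R)) (subseq_lt_sorted (mask_subseq m _) (zrange_sorted R)).

Lemma fmem_mkZ R m z : fmem (mkZ R m) z = (z \in mask m (zrange R)).
Proof. by []. Qed.

Lemma bounded_finite (R : nat) : exists L : seq finZset,
  forall g, (forall w, fmem g w -> `|w| <= R%:Z) -> g \in L.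
Proof.
exists [seq mkZ R m | m <- allbits (size (zrange R))] => g hg.
apply/mapP; exists [seq w \in sval g | w <- zrange R]; first by rewrite -(size_map (fun w => w \in sval g)) mem_allbits.
apply: finZ_ext => z; rewrite fmem_mkZ -(filter_mask (fun w => w \in sval g)) mem_filter.
rewrite -/(fmem g z); case e: (fmem g z) => //=; symmetry; apply: mem_zrange; exact: hg.
Qed.

Lemma fmem_iter x n w : fmem (iter n (fsymdiff x) fempty) w = odd n && fmem x w.
Proof.
elim: n => [|n IH] //=; rewrite fmemD IH.
by case: (odd n); case: (fmem x w).
Qed.

Lemma fmem_zpow x (m : int) w : odd `|m|%N ->
  fmem (zpow fsymdiff finZinv fempty x m) w = fmem x w.
Proof.
case: m => n h.
- by rewrite /zpow fmem_iter; move: h => /= ->.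
- by rewrite /zpow /finZinv fmem_iter; move: h => /= ->.
Qed.

Lemma fmem_foldr (l : seq finZset) w :
  fmem (foldr fsymdiff fempty l) w = \big[addb/false]_(g <- l) fmem g w.
Proof. by elim: l => [|g l IH]; rewrite ?big_nil ?big_cons //= fmemD IH. Qed.

Lemma fmem_perm_product k (m : 'I_k -> int) (x : 'I_k -> finZset) s w :
  (forall i, odd `|m i|%N) ->
  fmem (perm_product fsymdiff finZinv fempty m x s) w = \big[addb/false]_(i < k) fmem (x i) w.
Proof.
move=> hm; rewrite /perm_product fmem_foldr big_map.
rewrite (eq_bigr (fun i => fmem (x (s i)) w)); last by move=> i _; rewrite fmem_zpow.
rewrite big_enum /= [RHS](reindex_inj (@perm_inj _ s)) /=.
by apply: eq_bigl => i; rewrite inE.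
Qed.

Lemma sqz (x : int) : 0 <= x * x. Proof. nia. Qed.
Lemma cube_gap (a b : int) : a != b -> `|a| <= `|a ^+ 3 - b ^+ 3|.
Proof. move=> h.
have e : a ^+ 3 - b ^+ 3 = (a - b) * (a * a + a * b + b * b) by ring.
have hq : `|a| <= a * a + a * b + b * b.
  have h1 := sqz (b + b + a).
  have [ha|ha] : 2 <= `|a| \/ `|a| <= 1 by lia.
  - nia.
  - have : a = 0 \/ a = 1 \/ a = -1 by lia.
    case=> [->|[->|->]]; have := sqz b; nia.
have hd : 1 <= `|a - b| by move: h; lia.
have hq0 : 0 <= a * a + a * b + b * b by nia.
rewrite e normrM (ger0_norm hq0). nia.
Qed.

Lemma cube_mono (u v : int) : 0 <= u -> u <= v -> u ^+ 3 <= v ^+ 3.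
Proof. move=> h1 h2; rewrite ler_pXn2r // nnegrE //; exact: le_trans h2. Qed.

Definition bad (M : int -> bool) : Prop :=
  exists x y : int, x - y != 0 /\ (exists z : int, x - y = z ^+ 3) /\
    forall w, M w = (w == x) || (w == y).

Lemma bad_ext (M M' : int -> bool) : (forall w, M w = M' w) -> bad M -> bad M'.
Proof. by move=> E [x [y [h1 [h2 h3]]]]; exists x, y; do 2 split=> //; move=> w; rewrite -E. Qed.

Definition bnd (M : int -> bool) (R : int) := forall w, M w -> `|w| <= R.

Lemma bad_helper (e M : int -> bool) R x y a :
  bnd e R -> (exists w, e w) -> x - y != 0 -> x - y = a ^+ 3 ->
  (forall w, M w = (w == x) || (w == y)) -> bad (fun w => M w (+) e w) -> ~~ e x ->
  `|x| <= R + (R + R) ^+ 3.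
Proof.
move=> hb [w0 ew0] nz ha HM [x' [y' [nz' [[b hb'] HMe]]]] nex.
have hx : (x == x') || (x == y') by rewrite -HMe HM eqxx (negbTE nex).
have ey : e y.
  apply/negPn/negP => ney.
  have hy : (y == x') || (y == y') by rewrite -HMe /= HM eqxx orbT (negbTE ney).
  have := HMe w0; rewrite HM ew0.
  move: hx hy nz nz' => /orP[/eqP ?|/eqP ?] /orP[/eqP ?|/eqP ?]; subst;
    rewrite ?subrr ?eqxx //= => _ _.
  - by case: (_ || _).
  - by rewrite orbC; case: (_ || _).
have [t [ht1 [htx [c hc]]]] : exists t, ((t == x') || (t == y')) /\ t != x /\ exists c, x - t = c ^+ 3.
  have nxy : x' != y' by move: nz'; rewrite subr_eq0.
  case/orP: hx => /eqP ex.
  - exists y'; rewrite eqxx orbT ex eq_sym; do 2 split=> //; exists b; exact: hb'.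
  - exists x'; rewrite eqxx ex; do 2 split=> //; exists (- b).
    by rewrite -opprB hb'; ring.
have hty : t != y.
  apply/negP => /eqP ety; have := HMe t; rewrite ht1 HM ety eqxx orbT ey; by [].
have et : e t.
  have := HMe t; rewrite HM ht1 (negbTE htx) (negbTE hty) /=; by [].
have hac : a != c.
  apply/negP => /eqP eac; move: hty; rewrite eq_sym; apply/negP; apply/negPn/eqP.
  have : x - y = x - t by rewrite ha hc eac.
  move=> h; have -> : t = x - (x - t) by ring.
  rewrite -h; ring.
have h1 : `|a| <= R + R.
  apply: (le_trans (cube_gap hac)).
  have -> : a ^+ 3 - c ^+ 3 = t - y by rewrite -ha -hc; ring.
  apply: (le_trans (ler_normB _ _)); apply: lerD; exact: hb.
have -> : x = y + a ^+ 3 by rewrite -ha; ring.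
apply: (le_trans (ler_normD _ _)); apply: lerD; first exact: hb.
rewrite normrX; apply: cube_mono => //.
Qed.

Lemma bad_bnd (e M : int -> bool) R : 0 <= R -> bnd e R -> (exists w, e w) -> bad M ->
  bad (fun w => M w (+) e w) -> bnd M (R + (R + R) ^+ 3).
Proof.
move=> R0 hb he [x [y [nz [[a ha] HM]]]] hbad w; rewrite HM.
have h3 : 0 <= (R + R) ^+ 3 by rewrite exprn_ge0 // addr_ge0.
case/orP => /eqP ->.
- case ex: (e x); first by apply: (le_trans (hb _ ex)); rewrite lerDl.
  apply: (bad_helper hb he nz ha HM hbad); by rewrite ex.
- case ey: (e y); first by apply: (le_trans (hb _ ey)); rewrite lerDl.
  apply: (@bad_helper e M R y x (- a) hb he) => //.
  + by rewrite -opprB oppr_eq0.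
  + by rewrite -opprB ha; ring.
  + by move=> v; rewrite HM orbC.
  + by rewrite ey.
Qed.

Lemma fin_bnd (g : finZset) : exists R, 0 <= R /\ bnd (fmem g) R.
Proof.
exists (\sum_(x <- sval g) `|x|); split; first by rewrite sumr_ge0.
rewrite /bnd /fmem; elim: (sval g) => [|x s IH] w //.
rewrite inE big_cons => /orP[/eqP ->|/IH h].
- by rewrite lerDl sumr_ge0.
- by apply: (le_trans h); rewrite lerDr.
Qed.

Lemma nonfinite_pick (Y : finZset -> Prop) (l : seq finZset) :
  ~ finite_set Y -> exists g, Y g /\ g \notin l.
Proof.
move=> nf; apply: NNPP => hn; apply: nf; exists l => x Yx; apply/In_mem.
apply: NNPP => hx; apply: hn; exists x; split=> //; apply/negP => h; exact: hx.
Qed.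

Lemma claimC (s : int -> bool) Rs (Y : finZset -> Prop) : 0 <= Rs -> bnd s Rs ->
  ~ finite_set Y ->
  exists u v, Y u /\ Y v /\ u != v /\ ~ bad (fun w => s w (+) fmem u w (+) fmem v w).
Proof.
move=> Rs0 hs nf; apply: NNPP => H.
have H' : forall u v, Y u -> Y v -> u != v -> bad (fun w => s w (+) fmem u w (+) fmem v w).
  move=> u v Yu Yv uv; apply: NNPP => nb; apply: H; by exists u, v.
have [u0 [Yu0 _]] := nonfinite_pick [::] nf.
have [v1 [Yv1 hv1]] := nonfinite_pick [:: u0] nf.
have uv : u0 != v1 by move: hv1; rewrite inE eq_sym.
pose e w := fmem u0 w (+) fmem v1 w.
have he : exists w, e w.
  apply: NNPP => hn; move/eqP: uv; apply; apply: finZ_ext => z.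
  have : ~~ e z by apply/negP => ez; apply: hn; exists z.
  by rewrite /e; case: (fmem u0 z); case: (fmem v1 z).
have [Ru [Ru0 hu]] := fin_bnd u0.
have [Rv [Rv0 hv]] := fin_bnd v1.
have hbe : bnd e (Ru + Rv).
  move=> w; rewrite /e; case h1: (fmem u0 w); case h2: (fmem v1 w) => //= _.
  - by apply: (le_trans (hu _ h1)); rewrite lerDl.
  - by apply: (le_trans (hv _ h2)); rewrite lerDr.
set B := (Ru + Rv) + ((Ru + Rv) + (Ru + Rv)) ^+ 3.
have B0 : 0 <= B by rewrite addr_ge0 ?exprn_ge0 ?addr_ge0.
have hB : forall g, Y g -> g != u0 -> g != v1 -> bnd (fmem g) (B + Rs + Ru).
  move=> g Yg g1 g2.
  have ug : u0 != g by rewrite eq_sym.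
  have vg : v1 != g by rewrite eq_sym.
  have b1 := H' u0 g Yu0 Yg ug.
  have b2 := H' v1 g Yv1 Yg vg.
  have b2' : bad (fun w => (s w (+) fmem u0 w (+) fmem g w) (+) e w).
    apply: (bad_ext _ b2) => w; rewrite /e.
    by case: (s w); case: (fmem u0 w); case: (fmem v1 w); case: (fmem g w).
  have hM := bad_bnd (addr_ge0 Ru0 Rv0) hbe he b1 b2'.
  move=> w hw; case hm: (s w (+) fmem u0 w (+) fmem g w).
  - by apply: (le_trans (hM w hm)); rewrite -/B -addrA lerDl addr_ge0.
  - move: hm; rewrite hw; case h1: (s w); case h2: (fmem u0 w) => //= _.
    + by apply: (le_trans (hs _ h1)); lia.
    + by apply: (le_trans (hu _ h2)); lia.
have [L hL] := bounded_finite (absz (B + Rs + Ru)).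
apply: nf; exists [:: u0, v1 & L] => g Yg; apply/In_mem.
rewrite !inE; case g1: (g == u0) => //; case g2: (g == v1) => //=.
apply: hL => w hw; have := hB g Yg (negbT g1) (negbT g2) w hw.
lia.
Qed.

Lemma pick_list (X : finZset -> Prop) n : ~ finite_set X ->
  exists l : seq finZset, size l = n /\ uniq l /\ forall g, g \in l -> X g.
Proof.
move=> nf; elim: n => [|n [l [sl [ul lX]]]]; first by exists [::].
have [g [Xg gl]] := nonfinite_pick l nf.
exists (g :: l); rewrite /= sl gl ul; do 2 split=> //.
by move=> h; rewrite inE => /orP[/eqP ->|/lX].
Qed.

Lemma part1 k (m : 'I_k -> int) : (2 <= k)%N -> (forall i, odd `|m i|%N) ->
  ramsey_product_subset fsymdiff finZinv fempty m A_cube.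
Proof.
move=> hk hm X nf.
have [l [sl [ul lX]]] := pick_list (k - 2) nf.
set s0 := foldr fsymdiff fempty l.
have [Rs [Rs0 hs]] := fin_bnd s0.
pose Y g := X g /\ g \notin l.
have nfY : ~ finite_set Y.
  move=> [L hL]; apply: nf; exists (L ++ l) => g Xg; apply/In_mem; rewrite mem_cat.
  case: (boolP (g \in l)) => gl; first by rewrite orbT.
  by rewrite orbF; apply/In_mem; apply: hL.
have [u [v [[Xu ul'] [[Xv vl'] [uv nb]]]]] := claimC Rs0 hs nfY.
pose r := l ++ [:: u; v].
have sr : size r = k by rewrite size_cat sl /=; lia.
have ur : uniq r.
  rewrite cat_uniq ul /= inE negb_or uv andbT /= orbF.
  by rewrite (negbTE ul') (negbTE vl').
exists (fun i : 'I_k => nth fempty r i); split; last split.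
- move=> i j /eqP; rewrite nth_uniq ?sr //; move/eqP; exact: val_inj.
- move=> i; have : nth fempty r i \in r by rewrite mem_nth // sr.
  rewrite mem_cat => /orP[/lX //|]; rewrite !inE => /orP[] /eqP -> //.
- move=> sg hb; apply: nb; apply: (bad_ext _ hb) => w.
  rewrite fmem_perm_product // -(big_mkord xpredT (fun i => fmem (nth fempty r i) w)).
  rewrite -sr -(big_nth fempty xpredT (fun g => fmem g w)) big_cat /= !big_cons big_nil.
  by rewrite fmem_foldr addbF addbA.
Qed.

Local Open Scope ring_scope.

Lemma size_sub_eq (p1 p2 : {poly int}) n : size p1 = n -> size p2 = n -> (0 < n)%N ->
  (lead_coef p1 != lead_coef p2 -> size (p1 - p2)%R = n /\ lead_coef (p1 - p2) = lead_coef p1 - lead_coef p2)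
  /\ (lead_coef p1 = lead_coef p2 -> (size (p1 - p2)%R < n)%N).
Proof.
move=> s1 s2 n0.
have hle : (size (p1 - p2)%R <= n)%N.
  by apply: (leq_trans (size_polyD _ _)); rewrite size_polyN s1 s2 maxnn.
have hc : (p1 - p2)`_n.-1 = lead_coef p1 - lead_coef p2 by rewrite coefB !lead_coefE s1 s2.
split.
- move=> hne.
  have hs : size (p1 - p2)%R = n.
    apply/eqP; rewrite eqn_leq hle /=; rewrite leqNgt; apply/negP => hlt.
    move: hne; rewrite -subr_eq0 -hc nth_default ?eqxx //.
    by move: hlt; case: n {s1 s2 hle hc} n0.
  by split=> //; rewrite lead_coefE hs hc.
- move=> heq; rewrite ltn_neqAle hle andbT; apply/negP => /eqP hs.
  have : lead_coef (p1 - p2) = 0 by rewrite lead_coefE hs hc heq subrr.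
  move/eqP; rewrite lead_coef_eq0 => /eqP h0; move: hs; rewrite h0 size_poly0 => h.
  by move: n0; rewrite -h.
Qed.

Definition rho (q ps : {poly int}) (c : int) : {poly int} :=
  q \Po ('X + c%:P) - (q.[c])%:P - ps.

Lemma rho_eval q ps c y : (rho q ps c).[y] = q.[y + c] - q.[c] - ps.[y].
Proof. by rewrite /rho !hornerE horner_comp !hornerE. Qed.

Lemma Q1_props (q : {poly int}) c : (1 < size q)%N ->
  size (q \Po ('X + c%:P) - (q.[c])%:P)%R = size q /\
  lead_coef (q \Po ('X + c%:P) - (q.[c])%:P) = lead_coef q.
Proof.
move=> h1.
have hs : size (q \Po ('X + c%:P)) = size q := size_comp_poly2 _ (size_XaddC _).
have hl : lead_coef (q \Po ('X + c%:P)) = lead_coef q.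
  by rewrite lead_coef_comp ?size_XaddC // lead_coefXaddC expr1n mulr1.
have hc : (size (- (q.[c])%:P) < size (q \Po ('X + c%:P)))%N.
  by rewrite hs size_polyN size_polyC; apply: leq_ltn_trans h1; exact: leq_b1.
by rewrite size_polyDl // lead_coefDl // hs hl.
Qed.

Lemma rho_props (q ps : {poly int}) (c : int) : (2 <= size ps)%N -> (size ps <= size q)%N ->
  [/\ (size (rho q ps c) <= size q)%N,
      (size ps < size q)%N -> size (rho q ps c) = size q /\ lead_coef (rho q ps c) = lead_coef q,
      size q = size ps -> lead_coef q != lead_coef ps ->
        size (rho q ps c) = size q /\ lead_coef (rho q ps c) = lead_coef q - lead_coef ps
    & size q = size ps -> lead_coef q = lead_coef ps -> (size (rho q ps c) < size q)%N].
Proof.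
move=> h2 hle.
have h1 : (1 < size q)%N by apply: leq_trans hle.
have [s1 l1] := Q1_props c h1.
rewrite /rho; split.
- apply: (leq_trans (size_polyD _ _)); by rewrite size_polyN s1 geq_max leqnn hle.
- move=> hlt; have hh : (size (- ps) < size (q \Po ('X + c%:P) - (q.[c])%:P)%R)%N.
    by rewrite size_polyN s1.
  by rewrite size_polyDl // lead_coefDl // s1 l1.
- move=> es hne; have [H _] := size_sub_eq s1 (esym es) (ltnW h1).
  by rewrite -l1 in hne; have [-> ->] := H hne; rewrite l1.
- move=> es heq; have [_ H] := size_sub_eq s1 (esym es) (ltnW h1).
  by apply: H; rewrite l1.
Qed.

Definition patt (P : seq {poly int}) (C : finType) (chi : int -> C) (N a z : int) :=
  1 <= z <= N /\ `|a| <= N /\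
  forall q, q \in P -> `|a + q.[z]| <= N /\ chi (a + q.[z]) = chi a.

Definition PVW (P : seq {poly int}) : Prop :=
  forall C : finType, exists N : int, forall chi : int -> C, exists a z, patt P chi N a z.

Definition config (P : seq {poly int}) (ps : {poly int}) (C : finType) (chi : int -> C)
  (K b : int) (ds : seq int) :=
  `|b| <= K /\
  (forall d, d \in ds -> 1 <= d <= K /\
     forall q, q \in P -> `|b + q.[d]| <= K /\ chi (b + q.[d]) = chi (b + ps.[d])) /\
  uniq [seq chi (b + ps.[d]) | d <- ds].

Definition Gs (P : seq {poly int}) (ps : {poly int}) (s : nat) : Prop :=
  forall C : finType, exists K : int, 0 <= K /\ forall chi : int -> C,
  (exists a z, patt P chi K a z) \/ (exists b ds, size ds = s /\ config P ps chi K b ds).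

Definition Qf (P : seq {poly int}) (ps : {poly int}) (K : nat) : seq {poly int} :=
  [seq r <- [seq rho q ps c%:Z | q <- P, c <- iota 0 K.+1] | r != 0].

Lemma window (C : finType) (chi : int -> C) (K u t c : int) : 0 <= K -> `|c| <= K ->
  [ffun j : 'I_(2 * absz K).+1 => chi (u + t + (j%:Z - K))] =
  [ffun j : 'I_(2 * absz K).+1 => chi (u + (j%:Z - K))] ->
  chi (u + t + c) = chi (u + c).
Proof.
move=> K0 cK E.
have hj : (absz (c + K)%R < (2 * absz K).+1)%N by lia.
have := congr1 (fun f : {ffun _ -> C} => f (Ordinal hj)) E; rewrite !ffunE /=.
have -> : (absz (c + K)%R)%:Z - K = c by lia.
by [].
Qed.

Lemma poly_bnd (p : {poly int}) (N : int) :
  exists B, 0 <= B /\ forall y, `|y| <= N -> `|p.[y]| <= B.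
Proof.
suff H : forall n : nat, exists B, 0 <= B /\ forall y, `|y| <= n%:Z -> `|p.[y]| <= B.
  have [B [B0 HB]] := H (absz N); exists B; split=> // y hy; apply: HB; lia.
elim=> [|n [B [B0 HB]]].
  exists `|p.[0]|; split=> // y hy; have -> : y = 0 by lia. by [].
exists (B + `|p.[n.+1%:Z]| + `|p.[- n.+1%:Z]|); split; first by rewrite !addr_ge0.
move=> y hy.
have : y = n.+1%:Z \/ y = - n.+1%:Z \/ `|y| <= n%:Z by lia.
case=> [->|[->|h]]; last by have := HB y h; lia.
- lia.
- lia.
Qed.

Lemma all_colors (C : finType) (S : seq C) x : uniq S -> size S = #|C| -> x \in S.
Proof.
move=> uS sS; case: (boolP (x \in S)) => // nx.
have : uniq (x :: S) by rewrite /= nx.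
move/card_uniqP => h; have := max_card (mem (x :: S)).
by rewrite h /= sS ltnn.
Qed.

Lemma PVW_of_G P ps : (forall s, Gs P ps s) -> PVW P.
Proof.
move=> HG C; have [K [K0 HK]] := HG #|C| C; exists K => chi.
case: (HK chi) => [//|[b [ds [sds [bK [Hds Hu]]]]]].
have : chi b \in [seq chi (b + ps.[d]) | d <- ds] by apply: all_colors; rewrite // size_map.
case/mapP => d dds hd; exists b, d; have [dK Hq] := Hds d dds; split=> //; split=> //.
by move=> q qP; have [h1 h2] := Hq q qP; split=> //; rewrite h2 hd.
Qed.

Lemma G0 P ps : Gs P ps 0.
Proof. move=> C; exists 0; split=> // chi; right; exists 0, [::]; do 3 split=> //. Qed.

Lemma G_step P ps s : ps \in P -> (forall q, q \in P -> q.[0] = 0) ->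
  (forall K : nat, PVW (Qf P ps K)) -> Gs P ps s -> Gs P ps s.+1.
Proof.
move=> psP P0 HQ HG C.
have [K [K0 HK]] := HG C.
pose KN := absz K.
have eK : KN%:Z = K by rewrite /KN; lia.
have [N' HN] := HQ KN {ffun 'I_(2 * absz K).+1 -> C}.
have [Bp [Bp0 hBp]] := poly_bnd ps N'.
exists (`|N'| + K + Bp); split; first by rewrite !addr_ge0.
move=> chi.
pose chi' (v : int) : {ffun 'I_(2 * absz K).+1 -> C} :=
  [ffun j : 'I_(2 * absz K).+1 => chi (v + (j%:Z - K))].
have [u [y [/andP[y1 yN] [uN HQu]]]] := HN chi'.
have Hrho : forall q c, q \in P -> (c <= KN)%N ->
    `|u + (rho q ps c%:Z).[y]| <= N' /\ chi' (u + (rho q ps c%:Z).[y]) = chi' u.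
  move=> q c qP cK; case: (eqVneq (rho q ps c%:Z) 0) => [->|nz].
    by rewrite horner0 addr0.
  apply: HQu; rewrite mem_filter nz andTb.
  apply: (allpairs_f (fun q c => rho q ps c%:Z)) => //; rewrite mem_iota; lia.
have Hwin : forall t c, chi' (u + t) = chi' u -> `|c| <= K -> chi (u + t + c) = chi (u + c).
  move=> t c E cK; exact: (window K0 cK E).
case: (HK (fun x => chi (u + x))) => [[a0 [z0 [/andP[z1 zK] [aK Hq]]]]|[b0 [ds [sds [bK [Hds Hu]]]]]].
- left; exists (u + a0), z0; split; first by apply/andP; split=> //; lia.
  split; first lia.
  move=> q qP; have [h1 h2] := Hq q qP; split; first by rewrite -addrA; lia.
  by rewrite -addrA h2.
set b := u + b0.
have ybnd : `|y| <= N' by lia.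
have hpy := hBp y ybnd.
have key : forall d q, d \in ds -> q \in P ->
    `|b - ps.[y] + q.[d + y]| <= `|N'| + K + Bp /\
    chi (b - ps.[y] + q.[d + y]) = chi (u + (b0 + ps.[d])).
  move=> d q dds qP; have [/andP[d1 dK] Hd] := Hds d dds; have [h1 h2] := Hd q qP.
  have cK : (absz d <= KN)%N by rewrite /KN; lia.
  have [r1 r2] := Hrho q (absz d) qP cK.
  have ed : (absz d)%:Z = d by lia.
  rewrite ed in r1 r2.
  have E : b - ps.[y] + q.[d + y] = u + (rho q ps d).[y] + (b0 + q.[d]).
    by rewrite rho_eval (addrC y d) /b; ring.
  rewrite E; split; first lia.
  by rewrite (Hwin _ _ r2 h1) h2.
have key0 : forall q, q \in P ->
    `|b - ps.[y] + q.[y]| <= `|N'| + K + Bp /\ chi (b - ps.[y] + q.[y]) = chi b.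
  move=> q qP.
  have [r1 r2] := Hrho q 0%N qP (leq0n _).
  have E : b - ps.[y] + q.[y] = u + (rho q ps 0%:Z).[y] + b0.
    by rewrite rho_eval addr0 (P0 q qP) /b; ring.
  rewrite E; split; first lia.
  by rewrite (Hwin _ _ r2 bK).
case: (boolP (chi b \in [seq chi (u + (b0 + ps.[d])) | d <- ds])) => hb.
- left; case/mapP: hb => d dds hd; exists b, d.
  have [/andP[d1 dK] Hd] := Hds d dds.
  split; first by apply/andP; split=> //; lia.
  split; first by rewrite /b; lia.
  move=> q qP; have [h1 h2] := Hd q qP.
  split; first by rewrite /b -addrA; lia.
  by rewrite /b -addrA h2 hd.
- right; exists (b - ps.[y]), (rcons [seq d + y | d <- ds] y).
  split; first by rewrite size_rcons size_map sds.
  split; first by rewrite /b; lia.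
  split.
  + move=> d'; rewrite mem_rcons inE => /orP[/eqP ->|/mapP[d dds ->]].
    * split; first by apply/andP; split=> //; lia.
      move=> q qP; have [h1 h2] := key0 q qP; split=> //.
      by rewrite h2 (key0 ps psP).2.
    * have [/andP[d1 dK] _] := Hds d dds.
      split; first by apply/andP; split; lia.
      move=> q qP; have [h1 h2] := key d q dds qP; split=> //.
      by rewrite h2 (key d ps dds psP).2.
  + rewrite map_rcons (key0 ps psP).2 -map_comp rcons_uniq.
    have -> : [seq ((fun d : int => chi (b - ps.[y] + ps.[d])) \o +%R^~ y) i | i <- ds] =
       [seq chi (u + (b0 + ps.[d])) | d <- ds].
      by apply/eq_in_map => d dds /=; rewrite (key d ps dds psP).2.
    by rewrite hb.
Qed.

Lemma G_all P ps : ps \in P -> (forall q, q \in P -> q.[0] = 0) ->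
  (forall K : nat, PVW (Qf P ps K)) -> forall s, Gs P ps s.
Proof.
move=> psP P0 HQ; elim=> [|s IH]; first exact: G0.
exact: G_step.
Qed.

Definition validq (q : {poly int}) := [&& q != 0, q.[0] == 0 & (size q <= 4)%N].
Definition valid (P : seq {poly int}) := all validq P.

Definition leads (j : nat) (P : seq {poly int}) := [seq lead_coef q | q : {poly int} <- P & size q == j].
Definition wt j P := size (undup (leads j P)).

Lemma validq_size q : validq q -> (2 <= size q)%N.
Proof.
case/and3P => nz /eqP q0 _; rewrite ltnNge; apply/negP => hs.
rewrite horner_coef0 in q0.
have : lead_coef q = 0.
  rewrite lead_coefE; move: hs; case: (size q) => [|[|n]] //= _; exact: nth_nil.
by move/eqP; rewrite lead_coef_eq0 (negbTE nz).
Qed.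

Lemma undup_size_sub (T U : eqType) (f : T -> U) (s : seq T) (t : seq U) :
  {subset t <= map f s} -> (size (undup t) <= size (undup s))%N.
Proof.
move=> H; rewrite -(size_map f).
apply: uniq_leq_size; first exact: undup_uniq.
move=> x; rewrite mem_undup => /H /mapP[y ys ->]; apply: map_f; by rewrite mem_undup.
Qed.

Lemma memQf P ps K r : r \in Qf P ps K ->
  exists q c, q \in P /\ r = rho q ps c /\ r != 0.
Proof.
rewrite mem_filter => /andP[nz /allpairsP[[q c] [qP _ /= e]]].
by exists q, c%:Z; rewrite -e.
Qed.

Lemma wt_le P ps K j : valid P -> ps \in P -> (forall q, q \in P -> (size ps <= size q)%N) ->
  (size ps < j)%N -> (wt j (Qf P ps K) <= wt j P)%N.
Proof.
move=> vP psP hmin hj; apply: (@undup_size_sub _ _ id); rewrite map_id.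
move=> x /mapP[r]; rewrite mem_filter => /andP[/eqP sr rQ] ->.
have [q [c [qP [er _]]]] := memQf rQ; subst r.
have h2 : (2 <= size ps)%N by apply: validq_size; exact: (allP vP).
have [hA hB _ _] := rho_props c h2 (hmin q qP).
case: (ltnP (size ps) (size q)) => hq.
- have [e1 e2] := hB hq; rewrite e2; apply: map_f; rewrite mem_filter qP andbT -e1.
  by move: sr => ->.
- have : size q = size ps by apply/eqP; rewrite eqn_leq hq hmin.
  move=> e; move: (hA); rewrite e sr => h; move: hj; rewrite ltnNge h //.
Qed.

Lemma wt_lt P ps K : valid P -> ps \in P -> (forall q, q \in P -> (size ps <= size q)%N) ->
  (wt (size ps) (Qf P ps K) < wt (size ps) P)%N.
Proof.
move=> vP psP hmin.
set L := leads (size ps) P.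
have h2 : (2 <= size ps)%N by apply: validq_size; exact: (allP vP).
apply: (@leq_ltn_trans (size (undup [seq a <- L | a != lead_coef ps]))).
  apply: (@undup_size_sub _ _ (fun a => a - lead_coef ps)).
  move=> x /mapP[r]; rewrite mem_filter => /andP[/eqP sr rQ] ->.
  have [q [c [qP [er _]]]] := memQf rQ; subst r.
  have [hA hB hC hD] := rho_props c h2 (hmin q qP).
  case: (ltnP (size ps) (size q)) => hq.
  + have [e1 _] := hB hq; by move: hq; rewrite -e1 sr ltnn.
  + have e : size q = size ps by apply/eqP; rewrite eqn_leq hq hmin.
    case: (eqVneq (lead_coef q) (lead_coef ps)) => hl.
    * by have := hD e hl; rewrite sr e ltnn.
    * have [_ ->] := hC e hl; apply: map_f.
      by rewrite mem_filter hl /= /L map_f // mem_filter qP andbT e.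
rewrite -filter_undup size_filter.
have hin : lead_coef ps \in undup L by rewrite mem_undup /L map_f // mem_filter psP eqxx.
have : has (predC (fun a => a != lead_coef ps)) (undup L).
  by apply/hasP; exists (lead_coef ps) => //=; rewrite eqxx.
rewrite has_count => hc.
rewrite -[X in (_ < X)%N](count_predC (fun a => a != lead_coef ps)).
rewrite -{1}[count _ _]addn0 ltn_add2l; exact: hc.
Qed.

Lemma Qf_valid P ps K : valid P -> ps \in P -> valid (Qf P ps K).
Proof.
move=> vP psP; apply/allP => r rQ; have [q [c [qP [er nz]]]] := memQf rQ; subst r.
have /and3P[_ /eqP q0 q4] := allP vP q qP.
have /and3P[_ /eqP p0 p4] := allP vP ps psP.
rewrite /validq nz rho_eval add0r subrr p0 subr0 eqxx /=.
rewrite /rho; apply: (leq_trans (size_polyD _ _)); rewrite geq_max size_polyN p4 andbT.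
apply: (leq_trans (size_polyD _ _)); rewrite geq_max size_polyN size_comp_poly2 ?size_XaddC //.
by rewrite q4 /= size_polyC; case: (_ != 0).
Qed.

Lemma min_exists (P : seq {poly int}) : P != [::] ->
  exists ps, ps \in P /\ forall q, q \in P -> (size ps <= size q)%N.
Proof.
elim: P => [|p P IH] // _.
case: (eqVneq P [::]) => [->|nP].
  by exists p; split; [rewrite inE eqxx| move=> q; rewrite inE => /eqP ->].
have [ps [psP hm]] := IH nP.
case: (leqP (size p) (size ps)) => h.
- exists p; split; first by rewrite inE eqxx.
  move=> q; rewrite inE => /orP[/eqP ->//|/hm]; exact: leq_trans.
- exists ps; split; first by rewrite inE psP orbT.
  move=> q; rewrite inE => /orP[/eqP ->|/hm //]; exact: ltnW.
Qed.

Lemma PVW_main : forall (a b c : nat) (P : seq {poly int}), valid P ->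
  wt 4 P = a -> wt 3 P = b -> wt 2 P = c -> PVW P.
Proof.
elim/ltn_ind=> a IHa b; elim/ltn_ind: b => b IHb c; elim/ltn_ind: c => c IHc P vP ea eb ec.
case: (eqVneq P [::]) => [->|nP].
  move=> C; exists 1 => chi; exists 0, 1; do 2 split=> //.
have [ps [psP hmin]] := min_exists nP.
have vps := allP vP ps psP.
have h2 := validq_size vps.
have h4 : (size ps <= 4)%N by case/and3P: vps.
apply: (@PVW_of_G _ ps); apply: G_all => //.
  by move=> q qP; have /and3P[_ /eqP -> _] := allP vP q qP.
move=> K; set Q := Qf P ps K; have vQ : valid Q := Qf_valid K vP psP.
have hlt := wt_lt K vP psP hmin.
have hle := fun j => @wt_le P ps K j vP psP hmin.
have : size ps = 4%N \/ size ps = 3%N \/ size ps = 2%N by lia.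
case=> [e|[e|e]]; rewrite e in hlt hle.
- by apply: (IHa (wt 4 Q) _ (wt 3 Q) (wt 2 Q) Q vQ); rewrite -?ea.
- have l4 := hle 4%N erefl.
  case: (ltnP (wt 4 Q) a) => h.
    by apply: (IHa (wt 4 Q) h (wt 3 Q) (wt 2 Q) Q vQ).
  have e4 : wt 4 Q = a by apply/eqP; rewrite eqn_leq h -ea l4.
  by apply: (IHb (wt 3 Q) _ (wt 2 Q) Q vQ); rewrite -?eb.
- have l4 := hle 4%N erefl; have l3 := hle 3%N erefl.
  case: (ltnP (wt 4 Q) a) => h.
    by apply: (IHa (wt 4 Q) h (wt 3 Q) (wt 2 Q) Q vQ).
  have e4 : wt 4 Q = a by apply/eqP; rewrite eqn_leq h -ea l4.
  case: (ltnP (wt 3 Q) b) => h'.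
    by apply: (IHb (wt 3 Q) h' (wt 2 Q) Q vQ).
  have e3 : wt 3 Q = b by apply/eqP; rewrite eqn_leq h' -eb l3.
  by apply: (IHc (wt 2 Q) _ Q vQ); rewrite -?ec.
Qed.

Lemma cube_recurrence (C : finType) : exists N : int, forall chi : int -> C,
  exists a z : int, 1 <= z /\ chi (a + z ^+ 3) = chi a.
Proof.
have vP : valid [:: 'X^3].
  by rewrite /valid /= /validq hornerXn expr0n /= size_polyXn andbT -size_poly_eq0 size_polyXn.
have [N HN] := @PVW_main _ _ _ _ vP erefl erefl erefl C.
exists N => chi; have [a [z [/andP[z1 _] [_ H]]]] := HN chi.
exists a, z; split=> //; have [_ h] := H 'X^3 (mem_head _ _); by rewrite hornerXn in h.
Qed.

Lemma part2 : ~ exists B : finZset -> Prop,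
  large fsymdiff B /\ BBinv_sub fsymdiff finZinv B A_cube.
Proof.
case=> B [[F HF] HB].
have H : forall n : int, { fb : finZset * finZset |
    List.In fb.1 F /\ B fb.2 /\ single n = fsymdiff fb.1 fb.2 }.
  move=> n; apply: IndefiniteDescription.constructive_indefinite_description.
  by have [f [b [h1 [h2 h3]]]] := HF (single n); exists (f, b).
pose col (n : int) : 'I_(size F).+1 := inord (index (sval (H n)).1 F).
have [N HN] := cube_recurrence 'I_(size F).+1.
have [a [z [z1 hc]]] := HN col.
have [i1 [Bb1 e1]] := svalP (H a).
have [i2 [Bb2 e2]] := svalP (H (a + z ^+ 3)).
set f1 := (sval (H a)).1 in i1 e1 hc; set b1 := (sval (H a)).2 in Bb1 e1.
set f2 := (sval (H (a + z ^+ 3))).1 in i2 e2 hc; set b2 := (sval (H (a + z ^+ 3))).2 in Bb2 e2.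
have f1F : f1 \in F by apply/In_mem.
have f2F : f2 \in F by apply/In_mem.
have ef : f1 = f2.
  move: hc; rewrite /col -/f1 -/f2 => /(congr1 val) /=.
  rewrite !inordK ?ltnS ?index_size // => ei.
  by rewrite -(nth_index f1 f1F) -ei nth_index.
apply: (HB b2 b1 Bb2 Bb1).
have z0 : z ^+ 3 != 0 by rewrite expf_eq0 /=; apply/eqP => h; move: z1; rewrite h.
exists (a + z ^+ 3), a; split; first by rewrite addrC addKr.
split; first by exists z; rewrite addrC addKr.
move=> w; rewrite /finZinv fmemD.
have naz : a + z ^+ 3 != a by rewrite -subr_eq0 addrC addKr.
have hb1 : fmem b1 w = fmem f1 w (+) (w == a).
  by have := congr1 (fun g => fmem g w) e1; rewrite /= fmemD fmem_single => ->; rewrite addKb.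
have hb2 : fmem b2 w = fmem f1 w (+) (w == a + z ^+ 3).
  by have := congr1 (fun g => fmem g w) e2; rewrite /= fmemD fmem_single -ef => ->; rewrite addKb.
rewrite hb1 hb2.
case: (eqVneq w a) => [->|nwa].
  by rewrite eq_sym (negbTE naz) /=; case: (fmem f1 a).
by rewrite orbF; case: (fmem f1 w); case: (w == a + z ^+ 3).
Qed.

Lemma part3 (open : (finZset -> Prop) -> Prop) :
  is_group_topology fsymdiff finZinv open ->
  totally_bounded fsymdiff fempty open ->
  ~ neighbourhood_of_e fempty open A_cube.
Proof.
move=> [[_ [_ Hint]] [Hmul _]] Htb [U [oU [Ue UA]]].
have ee : fsymdiff fempty fempty = fempty by apply: finZ_ext => w; rewrite fmemD.
have Uee : U (fsymdiff fempty fempty) by rewrite ee.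
have [V [W [oV [oW [Ve [We HVW]]]]]] := Hmul U fempty fempty oU Uee.
have oO := Hint V W oV oW.
have lO : large fsymdiff (fun x => V x /\ W x).
  apply: Htb; exists (fun x => V x /\ W x); split=> //.
apply: part2; exists (fun x => V x /\ W x); split=> //.
move=> b1 b2 [V1 _] [_ W2]; apply: UA; exact: HVW.
Qed.

End Helpers.

Theorem proposition5p4 :
  (forall (k : nat) (m : 'I_k -> int), 2 <= k -> (forall i, odd `|m i|%N) ->
     ramsey_product_subset fsymdiff finZinv fempty m A_cube) /\
  (~ exists B : finZset -> Prop,
       large fsymdiff B /\ BBinv_sub fsymdiff finZinv B A_cube) /\
  (forall open : (finZset -> Prop) -> Prop,
     is_group_topology fsymdiff finZinv open ->
     totally_bounded fsymdiff fempty open ->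
     ~ neighbourhood_of_e fempty open A_cube).
Proof.
split; first exact: Helpers.part1.
split; first exact: Helpers.part2.
exact: Helpers.part3.
Qed.
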